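(* Let $K$ be a perfect field of characteristic $p>0$ and let $\theta:K[x]\to K[x^p]$ be the $\mathbb{F}_p$-linear map $\theta(f)=f^p+\frac{d^{p-1}f}{dx^{p-1}}$. Then: (1) the associated graded map $\mathrm{gr}(\theta)$, which equals the Frobenius $F:K[x]\to K[x^p]$, $f\mapsto f^p$, is an isomorphism of $\mathbb{F}_p$-algebras; (2) $\theta$ is an isomorphism of $\mathbb{F}_p$-vector spaces such that $\theta(K[x]_{\le i})=K[x^p]_{\le i}$ for all $i\ge 0$; (3) for each $f\in K[x]$, $l(\theta(f))=l(f)^p$.
   Context: $K[x]_{\le i}=\{f\in K[x]\mid \deg_x f\le i\}$ and $K[x^p]_{\le i}=\{g\in K[x^p]\mid \deg_{x^p}g\le i\}$; these are filtrations whose associated graded algebras are canonically identified with $K[x]$ and $K[x^p]$, and $\theta$ respects them, i.e. $\theta(K[x]_{\le i})\subseteq K[x^p]_{\le i}$. For $f=\sum_{i=0}^d\lambda_ix^i$ with $\lambda_d\ne0$, the leading term is $l(f)=\lambda_dx^d$; for $g=\sum_{i=0}^d\mu_ix^{pi}\in K[x^p]$ with $\mu_d\neq 0$, $l(g)=\mu_dx^{pd}$. *)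

(* Defs.v *)
From HB Require Import structures.
From mathcomp Require Import all_boot all_order all_algebra.
Set Implicit Arguments. Unset Strict Implicit. Unset Printing Implicit Defensive.
Import Order.TTheory GRing.Theory Num.Theory.
Local Open Scope ring_scope.

Definition perfect_char (K : fieldType) (p : nat) : Prop :=
  forall y : K, exists x : K, x ^+ p = y.

Definition inKxp (K : fieldType) (p : nat) (g : {poly K}) : Prop :=
  forall i : nat, ~~ (p %| i)%N -> g`_i = 0.

Definition inKx_le (K : fieldType) (i : nat) (f : {poly K}) : Prop :=
  (size f <= i.+1)%N.

(* K[x^p]_{<= i} : elements of K[x^p] of (x^p)-degree <= i, i.e. x-degree <= p*i *)
Definition inKxp_le (K : fieldType) (p i : nat) (g : {poly K}) : Prop :=
  inKxp p g /\ (size g <= p * i + 1)%N.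

Definition theta (K : fieldType) (p : nat) (f : {poly K}) : {poly K} :=
  f ^+ p + f^`(p.-1).

Definition frob (K : fieldType) (p : nat) (f : {poly K}) : {poly K} := f ^+ p.

Definition lead_term (K : fieldType) (f : {poly K}) : {poly K} :=
  lead_coef f *: 'X^((size f).-1).

(* Main.v *)
Require Import Defs.
From HB Require Import structures.
From mathcomp Require Import all_boot all_order all_algebra.
From mathcomp Require Import zify.
Import Order.TTheory GRing.Theory Num.Theory.
Local Open Scope ring_scope.

Section S.
Variables (K : fieldType) (p : nat) (hp : p \in [pchar K]).

Lemma hpp : p \in [pchar {poly K}].
Proof. by rewrite pchar_poly. Qed.

Lemma pprime : prime p. Proof. exact: pcharf_prime hp. Qed.
Lemma p_gt1 : (1 < p)%N. Proof. exact: prime_gt1 pprime. Qed.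

Lemma frobD (f g : {poly K}) : (f + g) ^+ p = f ^+ p + g ^+ p.
Proof. by rewrite -!(pFrobenius_autE hpp) rmorphD. Qed.

Lemma frobB (f g : {poly K}) : (f - g) ^+ p = f ^+ p - g ^+ p.
Proof. by rewrite -!(pFrobenius_autE hpp) rmorphB. Qed.

Lemma frob_comp (f : {poly K}) :
  f ^+ p = map_poly (pFrobenius_aut hp) f \Po 'X^p.
Proof.
elim/poly_ind: f => [|q c IH].
  by rewrite rmorph0 comp_poly0 expr0n /= eqn0Ngt (ltnW p_gt1).
rewrite frobD exprMn IH rmorphD rmorphM /= map_polyX map_polyC /=.
rewrite comp_polyD comp_polyM comp_polyX comp_polyC -rmorphXn /=.
by rewrite (pFrobenius_autE hp).
Qed.

Lemma coef_frob (f : {poly K}) i :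
  (f ^+ p)`_i = if (p %| i)%N then f`_(i %/ p) ^+ p else 0.
Proof.
rewrite frob_comp coef_comp_poly_Xn ?(ltnW p_gt1) //.
by case: ifP => // _; rewrite coef_map /= (pFrobenius_autE hp).
Qed.

Lemma coef_der (f : {poly K}) i : ~~ (p %| i)%N -> (f^`(p.-1))`_i = 0.
Proof.
move=> npi; rewrite coef_derivn -mulr_natr.
suff -> : ((p.-1 + i) ^_ p.-1)%:R = 0 :> K by rewrite mulr0.
apply/eqP; rewrite -(dvdn_pcharf hp).
have H : (p %| (p.-1 + i) ^_ p)%N.
  have [lt|le] := ltnP (p.-1 + i) p.
    by rewrite ffact_small.
  by rewrite -bin_ffact dvdn_mull // dvdn_fact // (prime_gt0 pprime) leqnn.
have Hq : p = p.-1.+1 by rewrite (prednK (prime_gt0 pprime)).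
move: H; set q := p.-1; rewrite [in X in (_ %| X)%N]Hq ffactnSr.
by rewrite Euclid_dvdM ?pprime // addKn (negbTE npi) orbF.
Qed.

Lemma size_der (f : {poly K}) : (size (f^`(p.-1)) <= size f - p.-1)%N.
Proof.
apply/leq_sizeP => j hj; rewrite coef_derivn nth_default ?mul0rn //.
move: hj; by rewrite leq_subLR.
Qed.


Lemma p_gt0 : (0 < p)%N. Proof. exact: prime_gt0 pprime. Qed.

Lemma size_der_lt (f : {poly K}) : f != 0 -> (size (f^`(p.-1)) < size f)%N.
Proof.
move=> nz; apply: leq_ltn_trans (size_der f) _.
have := p_gt1; have : (0 < size f)%N by rewrite size_poly_gt0.
lia.
Qed.

Lemma size_frob (f : {poly K}) : size (f ^+ p) = if f == 0 then 0%N else ((size f).-1 * p).+1.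
Proof.
have [->|nz] := eqVneq f 0; first by rewrite expr0n eqn0Ngt p_gt0 size_poly0.
rewrite -(size_exp f p) prednK // size_poly_gt0 expf_eq0 p_gt0 //.
Qed.

Lemma size_le_frob (f : {poly K}) : (size f <= size (f ^+ p))%N.
Proof.
rewrite size_frob; have [->|nz] := eqVneq f 0; first by rewrite size_poly0.
have := p_gt0; have : (0 < size f)%N by rewrite size_poly_gt0.
move=> h1 h2; have := leq_pmulr ((size f).-1) h2; lia.
Qed.

Lemma theta_split (f : {poly K}) :
  size (theta p f) = size (f ^+ p) /\ lead_coef (theta p f) = lead_coef (f ^+ p).
Proof.
rewrite /theta; have [->|nz] := eqVneq f 0.
  by rewrite expr0n eqn0Ngt p_gt0 /= linear0 addr0.
have h : (size (f^`(p.-1)) < size (f ^+ p))%N.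
  exact: leq_trans (size_der_lt f nz) (size_le_frob f).
by rewrite size_polyDl // lead_coefDl.
Qed.

Lemma thetaD (f g : {poly K}) : theta p (f + g) = theta p f + theta p g.
Proof. by rewrite /theta frobD derivnD addrACA. Qed.

Lemma thetaB (f g : {poly K}) : theta p (f - g) = theta p f - theta p g.
Proof. by rewrite /theta frobB derivnB opprD addrACA. Qed.

Lemma theta_inj : injective (@theta K p).
Proof.
move=> f g e; apply/eqP; rewrite -subr_eq0.
have : theta p (f - g) = 0 by rewrite thetaB e subrr.
move=> h; have := (theta_split (f - g)).1; rewrite h size_poly0.
by move/esym/eqP; rewrite size_poly_eq0 expf_eq0 p_gt0.
Qed.

Lemma inKxp_theta (f : {poly K}) : inKxp p (theta p f).
Proof.
move=> i npi; by rewrite /theta coefD coef_frob (negbTE npi) coef_der // addr0.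
Qed.


Lemma frob_surj (hperf : perfect_char K p) (g : {poly K}) :
  inKxp p g -> exists f : {poly K}, f ^+ p = g.
Proof.
move=> hg.
have ex : forall y : K, exists x : K, x ^+ p == y.
  by move=> y; have [x hx] := hperf y; exists x; apply/eqP.
exists (\poly_(j < size g) xchoose (ex g`_(j * p)%N)).
apply/polyP => i; rewrite coef_frob coef_poly.
case: ifP => [pi|npi]; last by rewrite hg // npi.
case: ifP => [lt|ge].
  by rewrite (eqP (xchooseP (ex _))) divnK.
rewrite expr0n eqn0Ngt p_gt0 /= nth_default //.
apply: leq_trans (leq_div i p); by rewrite leqNgt ge.
Qed.

Lemma theta_graded (hperf : perfect_char K p) (i : nat) (g : {poly K}) :
  inKxp_le p i g -> exists f, inKx_le i f /\ theta p f = g.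
Proof.
elim: i g => [|k IH] g [hg sg].
  have [f0 e] := frob_surj hperf _ hg.
  have sf : (size f0 <= 1)%N.
    by apply: leq_trans (size_le_frob f0) _; rewrite e; move: sg; rewrite muln0.
  exists f0; split => //; rewrite /theta e derivn_poly0 ?addr0 //.
  by apply: leq_trans sf _; rewrite -ltnS (prednK p_gt0) p_gt1.
have [f0 e] := frob_surj hperf _ hg.
have sf : (size f0 <= k.+2)%N.
  move: sg; rewrite -e size_frob; case: eqP => [->|_]; first by rewrite size_poly0.
  rewrite addn1 ltnS mulnC leq_pmul2l ?p_gt0 //.
  by case: (size f0).
set r := g - theta p f0.
have rE : r = - f0^`(p.-1) by rewrite /r /theta e opprD addrA subrr add0r.
have [|f1 [s1 t1]] := IH r.
  split.
    by move=> j nj; rewrite rE coefN coef_der // oppr0.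
  rewrite rE size_polyN; apply: leq_trans (size_der f0) _.
  have := leq_pmull k p_gt0; have := p_gt1; lia.
exists (f0 + f1); split.
  rewrite /inKx_le; apply: leq_trans (size_polyD _ _) _.
  rewrite geq_max sf; apply: leq_trans s1 _; by [].
by rewrite thetaD t1 /r addrC subrK.
Qed.

End S.
Theorem lemma2p1 (K : fieldType) (p : nat)
  (hp : p \in [pchar K]) (hperf : perfect_char K p) :
  (* (1) gr(theta) = F : on K[x]_{<= 0} theta = F, and for f in K[x]_{<= i+1},
         theta f - F f lies in K[x^p]_{<= i} *)
  ((forall f : {poly K}, inKx_le 0 f -> theta p f = frob p f) /\
   (forall (i : nat) (f : {poly K}), inKx_le i.+1 f ->
        inKxp_le p i (theta p f - frob p f))) /\
  (*     F : K[x] -> K[x^p] is an isomorphism of F_p-algebras *)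
  ((forall f g : {poly K}, frob p (f + g) = frob p f + frob p g) /\
   (forall f g : {poly K}, frob p (f * g) = frob p f * frob p g) /\
   @frob K p 1 = 1 /\
   (forall f : {poly K}, inKxp p (frob p f)) /\
   injective (@frob K p) /\
   (forall g : {poly K}, inKxp p g -> exists f, frob p f = g)) /\
  (* (2) theta : K[x] -> K[x^p] is an F_p-linear bijection with
         theta(K[x]_{<= i}) = K[x^p]_{<= i} *)
  ((forall f g : {poly K}, theta p (f + g) = theta p f + theta p g) /\
   (forall f : {poly K}, inKxp p (theta p f)) /\
   injective (@theta K p) /\
   (forall g : {poly K}, inKxp p g -> exists f, theta p f = g) /\
   (forall (i : nat) (f : {poly K}), inKx_le i f -> inKxp_le p i (theta p f)) /\
   (forall (i : nat) (g : {poly K}), inKxp_le p i g ->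
        exists f, inKx_le i f /\ theta p f = g)) /\
  (* (3) l(theta f) = l(f)^p *)
  (forall f : {poly K}, lead_term (theta p f) = lead_term f ^+ p).
Proof.
have P1 := p_gt1 _ _ hp.
have P0 := p_gt0 _ _ hp.
have frobI : injective (@frob K p).
  move=> f g e; apply/eqP; rewrite -subr_eq0.
  have : (f - g) ^+ p == 0 by rewrite (frobB _ _ hp); move: e; rewrite /frob => ->; rewrite subrr.
  by rewrite expf_eq0 P0.
split; [split|split; [|split]].
- move=> f hf; rewrite /theta /frob derivn_poly0 ?addr0 //.
  by apply: leq_trans hf _; rewrite -ltnS (prednK P0).
- move=> i f hf; rewrite /theta /frob addrC addKr; split.
    by move=> j nj; rewrite coef_der.
  apply: leq_trans (size_der _ _ f) _.
  move: hf; rewrite /inKx_le; have := leq_pmull i P0; lia.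
- split; first by move=> f g; rewrite /frob (frobD _ _ hp).
  split; first by move=> f g; rewrite /frob exprMn.
  split; first by rewrite /frob expr1n.
  split; first by move=> f j nj; rewrite /frob (coef_frob _ _ hp) (negbTE nj).
  split; first exact: frobI.
  by move=> g hg; have [f e] := frob_surj _ _ hp hperf g hg; exists f.
- split; first exact: (thetaD _ _ hp).
  split; first exact: (inKxp_theta _ _ hp).
  split; first exact: (theta_inj _ _ hp).
  split.
    move=> g hg.
    have hg' : inKxp_le p (size g) g by split => //; have := leq_pmull (size g) P0; lia.
    by have [f [_ e]] := theta_graded _ _ hp hperf (size g) g hg'; exists f.
  split; last by move=> i g hg; exact: theta_graded _ _ hp hperf i g hg.
  move=> i f hf; split; first exact: (inKxp_theta _ _ hp).
  rewrite (theta_split _ _ hp f).1; apply: leq_trans (size_poly_exp_leq f p) _.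
  rewrite addn1 ltnS mulnC leq_mul2l; apply/orP; right.
  by move: hf; rewrite /inKx_le; case: (size f).
- move=> f; rewrite /lead_term (theta_split _ _ hp f).1 (theta_split _ _ hp f).2.
  rewrite lead_coef_exp exprZn -exprM size_exp mulnC //.
Qed.
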